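(* Let $G=(V,E)$ be a graph of neighborhood diversity $k$ with neighborhood diversity classes $N_1,\ldots,N_k$, and let $r$ be a non-negative integer. Then the number of pairwise $r$-nonequivalent shapes of subsets of $V$ in $G$ (i.e., the number of classes of the $r$-equivalence relation on the set of shapes of subsets $X \subseteq V$) is at most $(2r+3)^k$.
   Context: The neighborhood diversity of $G$ is the minimum size of a partition of $V$ into classes such that any two vertices $v,v'$ in the same class satisfy $N(v)\setminus\{v'\} = N(v')\setminus\{v\}$; $N_1,\ldots,N_k$ is such a partition of minimum size $k$. The shape of $X \subseteq V$ is the $k$-tuple $s=(s_1,\ldots,s_k)$ with $s_i = |X\cap N_i|$; its complementary shape is $\overline{s} = (|N_1|-s_1,\ldots,|N_k|-s_k)$, the shape of $V\setminus X$. Two shapes $s,t$ are $r$-equivalent if for every $i$ either $s_i = t_i$ or both $s_i,t_i > r$, and the same condition holds for the complementary shapes $\overline{s},\overline{t}$. *)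

(* Defs.v *)
From mathcomp Require Import all_boot.
Set Implicit Arguments. Unset Strict Implicit. Unset Printing Implicit Defensive.

Definition simple_graph (T : finType) (e : rel T) : Prop :=
  symmetric e /\ irreflexive e.

Definition nbhd (T : finType) (e : rel T) (v : T) : {set T} := [set u | e v u].

Definition nd_partition (T : finType) (e : rel T) (k : nat)
    (cls : 'I_k -> {set T}) : Prop :=
  [/\ forall i, cls i != set0,
      forall i j, i != j -> [disjoint cls i & cls j],
      forall v, exists i, v \in cls i
    & forall i v v', v \in cls i -> v' \in cls i ->
        nbhd e v :\ v' = nbhd e v' :\ v].

(* cls is a neighbourhood-diversity partition of minimum size k
   (so k is the neighbourhood diversity of the graph). *)
Definition min_nd_partition (T : finType) (e : rel T) (k : nat)
    (cls : 'I_k -> {set T}) : Prop :=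
  nd_partition e cls /\
  forall k' (cls' : 'I_k' -> {set T}), nd_partition e cls' -> k <= k'.

Definition nd_shape (T : finType) (k : nat) (cls : 'I_k -> {set T})
    (X : {set T}) : 'I_k -> nat :=
  fun i => #|X :&: cls i|.

Definition cshape (T : finType) (k : nat) (cls : 'I_k -> {set T})
    (s : 'I_k -> nat) : 'I_k -> nat :=
  fun i => #|cls i| - s i.

Definition req_vec (k r : nat) (s t : 'I_k -> nat) : bool :=
  [forall i, (s i == t i) || ((r < s i) && (r < t i))].

Definition r_equiv (T : finType) (k : nat) (cls : 'I_k -> {set T}) (r : nat)
    (s t : 'I_k -> nat) : bool :=
  req_vec r s t && req_vec r (cshape cls s) (cshape cls t).

(* Main.v *)
Require Import Defs.
From mathcomp Require Import all_boot.
From mathcomp Require Import zify.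

Definition pcode (r n s : nat) : nat :=
  if s <= r then s else if n - s <= r then r.+1 + (n - s) else (2 * r).+2.

Lemma pcode_lt r n s : s <= n -> pcode r n s < 2 * r + 3.
Proof. rewrite /pcode => H; case: ifP => H1; [lia|case: ifP => H2; lia]. Qed.

Lemma pcode_eq r n s t : s <= n -> t <= n -> pcode r n s = pcode r n t ->
  ((s == t) || ((r < s) && (r < t))) &&
  ((n - s == n - t) || ((r < n - s) && (r < n - t))).
Proof.
rewrite /pcode => Hs Ht.
case: ifP => H1; [|case: ifP => H2];
  (case: ifP => H3; [|case: ifP => H4]); lia.
Qed.

Theorem proposition2 (T : finType) (e : rel T) (k : nat)
    (cls : 'I_k -> {set T}) (r : nat) :
  simple_graph e ->
  min_nd_partition e cls ->
  forall F : {set {set T}},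
    (forall X Y, X \in F -> Y \in F -> X != Y ->
       ~~ r_equiv cls r (nd_shape cls X) (nd_shape cls Y)) ->
    #|F| <= (2 * r + 3) ^ k.
Proof.
move=> _ _ F HF.
pose f (X : {set T}) : {ffun 'I_k -> 'I_(2 * r + 3)} :=
  [ffun i => Ordinal (@pcode_lt r #|cls i| #|X :&: cls i| (subset_leq_card (subsetIr X (cls i))))].
have inj : {in F &, injective f}.
  move=> X Y HX HY Hf; apply/eqP; apply/negPn/negP => Hne.
  move: (HF X Y HX HY Hne); apply/negP/negPn.
  have H : forall i, ((nd_shape cls X i == nd_shape cls Y i) ||
       ((r < nd_shape cls X i) && (r < nd_shape cls Y i))) &&
      ((cshape cls (nd_shape cls X) i == cshape cls (nd_shape cls Y) i) ||
       ((r < cshape cls (nd_shape cls X) i) && (r < cshape cls (nd_shape cls Y) i))).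
    move=> i; rewrite /cshape /nd_shape; apply: pcode_eq.
    - exact: subset_leq_card (subsetIr X (cls i)).
    - exact: subset_leq_card (subsetIr Y (cls i)).
    - by move: (congr1 (fun g : {ffun 'I_k -> 'I_(2 * r + 3)} => val (g i)) Hf); rewrite /f !ffunE.
  rewrite /r_equiv /req_vec; apply/andP; split; apply/forallP => i;
    by case/andP: (H i).
rewrite -(card_in_imset inj).
apply: leq_trans (max_card _) _.
by rewrite card_ffun !card_ord.
Qed.
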